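(* Let $a\in\mathbb{C}$ and $\varphi(z)=az^2+(1-2a)z+a$, so that $\varphi(1)=1$ and $\varphi'(1)=1$. Then $\varphi$ maps the open unit disk $\mathbb{D}$ into $\mathbb{D}$ if and only if $|a-\tfrac14|\le \tfrac14$. Moreover, if $|a-\tfrac14|\le\tfrac14$ and $a\neq 0$, then the only points $\zeta\in\partial\mathbb{D}$ with $|\varphi(\zeta)|=1$ are $\zeta=1$ (with $\varphi(1)=1$) and, only in the case $|a-\tfrac14|=\tfrac14$, the point $\zeta=-1$ (with $\varphi(-1)=4a-1$); every other point of $\partial\mathbb{D}$ is mapped into $\mathbb{D}$.
   Context: $\mathbb{D}=\{z\in\mathbb{C}:|z|<1\}$ is the open unit disk and $\partial\mathbb{D}$ the unit circle. $\varphi$ is a polynomial, hence analytic on a neighborhood of $\overline{\mathbb{D}}$. *)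

(* Defs.v *)
From HB Require Import structures.
From mathcomp Require Import all_boot all_order all_algebra.
From mathcomp Require Import complex.
From mathcomp Require Import reals.
Set Implicit Arguments. Unset Strict Implicit. Unset Printing Implicit Defensive.
Import Order.TTheory GRing.Theory Num.Theory.
Local Open Scope ring_scope.
Local Open Scope complex_scope.

Definition phi_poly (R : realType) (a : R[i]) : {poly R[i]} :=
  a *: 'X^2 + (1 - 2 * a) *: 'X + a%:P.

(* Main.v *)
Require Import Defs.
From HB Require Import structures.
From mathcomp Require Import all_boot all_order all_algebra.
From mathcomp Require Import complex.
From mathcomp Require Import reals.
From mathcomp Require Import ring lra.
Import Order.TTheory GRing.Theory Num.Theory.
Local Open Scope ring_scope.
Local Open Scope complex_scope.

Section S.
Context {R : realType}.
Definition N2 (w : R[i]) : R := complex.Re w ^+ 2 + complex.Im w ^+ 2.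
Definition nr (w : R[i]) : R := Num.sqrt (N2 w).
Lemma nrE (w : R[i]) : `|w| = (nr w)%:C.
Proof. by rewrite normc_def. Qed.
Lemma N2_ge0 w : 0 <= N2 w. Proof. by rewrite /N2 addr_ge0 ?sqr_ge0. Qed.
Lemma nr_ge0 w : 0 <= nr w. Proof. exact: sqrtr_ge0. Qed.
Lemma nr_sqr w : nr w ^+ 2 = N2 w. Proof. by rewrite sqr_sqrtr ?N2_ge0. Qed.

Lemma nr_le w (r : R) : 0 <= r -> (nr w <= r) = (N2 w <= r ^+ 2).
Proof. by move=> r0; rewrite -{1}(ger0_norm r0) -sqrtr_sqr ler_sqrt ?sqr_ge0. Qed.
Lemma nr_lt1 w : (nr w < 1) = (N2 w < 1).
Proof. by rewrite -{1}sqrtr1 ltr_sqrt ?ltr01. Qed.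
Lemma nr_eq w (r : R) : 0 <= r -> (nr w == r) = (N2 w == r ^+ 2).
Proof. by move=> r0; rewrite -{1}(ger0_norm r0) -sqrtr_sqr eqr_sqrt ?sqr_ge0 ?N2_ge0. Qed.

Lemma C_lt1 w : (`|w| < 1) = (N2 w < 1).
Proof. by rewrite nrE -(rmorph1 (real_complex R)) ltcR nr_lt1. Qed.
Lemma C_eq1 w : (`|w| = 1) <-> (N2 w = 1).
Proof.
rewrite nrE -(rmorph1 (real_complex R)); split.
  by case=> /eqP; rewrite nr_eq ?ler01 // expr1n => /eqP.
by move=> h; congr (_ %:C); apply/eqP; rewrite nr_eq ?ler01 // h expr1n.
Qed.
Lemma c4 : ((4:R)^-1)%:C = 4^-1 :> R[i].
Proof. by rewrite fmorphV rmorph_nat. Qed.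
Lemma C_le4 w : (`|w - 4^-1| <= 4^-1) = (N2 (w - ((4:R)^-1)%:C) <= (4^-1) ^+ 2).
Proof. by rewrite nrE -c4 lecR nr_le // invr_ge0. Qed.
Lemma C_eq4 w : (`|w - 4^-1| == 4^-1) = (N2 (w - ((4:R)^-1)%:C) == (4^-1) ^+ 2).
Proof. by rewrite nrE -c4 (inj_eq (@complexI R)) nr_eq // invr_ge0. Qed.

Lemma nrM x y : nr (x * y) = nr x * nr y.
Proof. by apply: (@complexI R); rewrite rmorphM /= -!nrE normrM. Qed.
Lemma nrD x y : nr (x + y) <= nr x + nr y.
Proof. by rewrite -lecR rmorphD /= -!nrE ler_normD. Qed.
Lemma nrB x y : nr (x - y) <= nr x + nr y.
Proof. by rewrite -lecR rmorphD /= -!nrE ler_normB. Qed.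
Lemma nrC (k : R) : nr k%:C = `|k|.
Proof. by rewrite /nr /N2 /= expr0n /= addr0 sqrtr_sqr. Qed.
Lemma nrX2 x : nr (x ^+ 2) = N2 x.
Proof. by rewrite expr2 nrM -expr2 nr_sqr. Qed.

Lemma phiE (A B u v : R) : (phi_poly (A +i* B)).[u +i* v] =
  (u + A * ((u-1)^+2 - v^+2) - B * (2 * (u-1) * v)) +i*
  (v + A * (2*(u-1)*v) + B * ((u-1)^+2 - v^+2)).
Proof.
rewrite /phi_poly !hornerE /=.
by apply/eqP; rewrite eq_complex /=; apply/andP; split; apply/eqP; ring.
Qed.
Lemma nr1 : nr 1 = 1.
Proof. by rewrite /nr /N2 /= expr1n expr0n addr0 sqrtr1. Qed.
Lemma N2E (u v : R) : N2 (u +i* v) = u ^+ 2 + v ^+ 2. Proof. by []. Qed.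
Lemma eqC1 (u v : R) : (u +i* v = 1) <-> (u = 1 /\ v = 0).
Proof.
split; last by case=> -> ->.
by move/eqP; rewrite eq_complex /= => /andP[/eqP -> /eqP ->].
Qed.
Lemma eqCm1 (u v : R) : (u +i* v = -1) <-> (u = -1 /\ v = 0).
Proof.
split; last by case=> -> ->; apply/eqP; rewrite eq_complex /= oppr0 !eqxx.
by move/eqP; rewrite eq_complex /= oppr0 => /andP[/eqP -> /eqP ->].
Qed.
Lemma keyR (A S u : R) : 0 < A -> S <= A/2 -> -1 <= u <= 1 ->
  (2-2*u)*((2-2*u)*S - 2*A) <= 0 /\
  ((2-2*u)*((2-2*u)*S - 2*A) = 0 -> u = 1 \/ (u = -1 /\ S = A/2)).
Proof.
move=> hA hS /andP[hu1 hu2].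
have h1 : (2-2*u)*S - 2*A <= - A * (1 + u).
  have : (2-2*u)*S <= (2-2*u)*(A/2) by apply: ler_wpM2l; lra.
  lra.
have h2 : 0 <= 2 - 2*u by lra.
have h3 : 0 <= A * (1+u) by apply: mulr_ge0; lra.
split; first by rewrite mulr_ge0_le0 //; lra.
move=> /eqP; rewrite mulf_eq0 => /orP[/eqP h|/eqP h].
  by left; lra.
right.
have hu : u = -1.
  have : (2-2*u)*S <= (2-2*u)*(A/2) by apply: ler_wpM2l; lra.
  nra.
split=> //; rewrite hu in h; lra.
Qed.

Lemma bnd (A B u v : R) : u^+2 + v^+2 = 1 ->
  N2 ((phi_poly (A +i* B)).[u +i* v]) - 1 =
  (2-2*u)*((2-2*u)*(A^+2+B^+2) - 2*A).
Proof.
move=> huv; rewrite phiE N2E.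
have hX : (u-1)^+2 - v^+2 = - u * (2 - 2*u) by nra.
move: ((u-1)^+2 - v^+2) hX => X ->.
set t := 2 - 2 * u.
have -> : (u + A * (- u * t) - B * (2 * (u - 1) * v)) ^+ 2 +
  (v + A * (2 * (u - 1) * v) + B * (- u * t)) ^+ 2 =
  (u^+2+v^+2) * ((1 - A*t)^+2 + (B*t)^+2) by rewrite /t; ring.
rewrite huv mul1r /t; ring.
Qed.
End S.

Local Close Scope complex_scope.

Theorem mainTheorem1 (R : realType) (a : R[i]) :
  let phi := phi_poly a in
  let onBoundaryCirc := `|a - 4^-1| == 4^-1 in
  (* normalisation *)
  [/\ phi.[1] = 1, (phi^`()).[1] = 1,
  (* self-map of the unit disk iff |a - 1/4| <= 1/4 *)
   (forall z : R[i], `|z| < 1 -> `|phi.[z]| < 1) <-> `|a - 4^-1| <= 4^-1 &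
  (* boundary behaviour *)
   `|a - 4^-1| <= 4^-1 -> a != 0 ->
     forall zeta : R[i], `|zeta| = 1 ->
       (`|phi.[zeta]| = 1 <-> (zeta = 1 \/ (onBoundaryCirc /\ zeta = -1)))
       /\ (~ (zeta = 1 \/ (onBoundaryCirc /\ zeta = -1)) -> `|phi.[zeta]| < 1)
       /\ (zeta = -1 -> phi.[zeta] = 4 * a - 1)].
Proof.
move=> phi onB.
have hp1 : phi.[1] = 1 by rewrite /phi /phi_poly !hornerE /=; ring.
have hd1 : (phi^`()).[1] = 1 by rewrite /phi /phi_poly !derivE !hornerE /=; ring.
split=> //; clear hp1 hd1; rewrite /onB /phi; clear onB phi.
- have [A [B E]] : exists A B, a = (A +i* B)%C by case: a => A B; exists A, B.
  have hS : N2 (a - ((4:R)^-1)%:C)%C = (A - 4^-1)^+2 + B^+2.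
    by rewrite E /N2 /= subr0.
  rewrite C_le4 hS.
  split.
  + move=> H; rewrite leNgt; apply/negP => hlt.
    set k := nr (4 * a - 1).
    have hN : N2 (4 * a - 1) = (4*A - 1)^+2 + (4*B)^+2.
      by rewrite E /N2 /=; ring.
    have hN1 : 1 < (4*A - 1)^+2 + (4*B)^+2.
      have -> : (4*A - 1)^+2 + (4*B)^+2 = 16 * ((A - 4^-1)^+2 + B^+2) by field.
      have q : (4^-1:R)^+2 = 16^-1 by field.
      rewrite q in hlt.
      have q2 : (16:R) * 16^-1 = 1 by field.
      nra.
    have hk : 1 < k.
      by rewrite /k /nr -{1}sqrtr1 ltr_sqrt hN //; apply: lt_trans hN1.
    set e := k - 1.
    set K := 1 + 4 * nr a.
    have he : 0 < e by rewrite /e subr_gt0.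
    have hK : 0 < K by rewrite /K; have := nr_ge0 a; lra.
    set d := e / (K + e).
    have hd : d * (K + e) = e by rewrite /d mulfVK //; apply/lt0r_neq0; lra.
    have hd0 : 0 < d by rewrite /d divr_gt0 //; lra.
    have hde : 0 < d * e by rewrite mulr_gt0.
    have hd' : d * K + d * e = e by rewrite -mulrDr.
    have ee : e = k - 1 by [].
    have eK : K = 1 + 4 * nr a by [].
    have hd1 : d < 1.
      rewrite ltNge; apply/negP => h1.
      have : K + e <= d * (K + e) by rewrite ler_peMl //; lra.
      lra.
    have [r er] : exists r, r = 1 - d by eexists.
    have hz : `|(- r%:C)%C| < 1.
      rewrite C_lt1 /N2 /= oppr0 expr0n addr0 sqrrN.
      have : 0 < r by lra.
      move=> hr; nra.
    have Hp := H _ hz.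
    rewrite C_lt1 -nr_lt1 in Hp.
    set pz := (phi_poly a).[(- r%:C)%C] in Hp *.
    have id : pz - (4*a - 1) = ((1-r)%:C * (1 - a * (3+r)%:C))%C.
      rewrite /pz /phi_poly !hornerE rmorphB rmorphD rmorph1 /= rmorph_nat.
      ring.
    have b1 : k <= nr pz + nr (pz - (4*a-1)).
      have := nrB pz (pz - (4*a-1)).
      by rewrite (_ : pz - (pz - (4*a-1)) = 4*a-1) //; ring.
    have b2 : nr (pz - (4*a-1)) <= d * (1 + nr a * (3 + r)).
      rewrite id nrM nrC (_ : 1 - r = d); last by rewrite er; ring.
      rewrite ger0_norm; last lra.
      apply: ler_wpM2l; first lra.
      have := nrB 1 (a * (3 + r)%:C)%C.
      rewrite nr1 nrM nrC ger0_norm //; lra.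
    have na0 := nr_ge0 a.
    have b3 : nr a * (3 + r) <= 4 * nr a by nra.
    have b4 : d * (1 + nr a * (3 + r)) <= d * K.
      by apply: ler_wpM2l; lra.
    suff : k < k by rewrite ltxx.
    lra.
  + move=> h z hz.
    rewrite C_lt1 in hz; rewrite (C_lt1 (phi_poly a).[z]) -nr_lt1.
    set c := 1 - 4 * a.
    have id : ((4:R)%:C * (phi_poly a).[z] = (z+1)^+2 - c * (z-1)^+2)%C.
      by rewrite /c /phi_poly !hornerE /= rmorph_nat; ring.
    have hc : nr c <= 1.
      rewrite nr_le ?ler01 // expr1n.
      have -> : N2 c = (1 - 4*A)^+2 + (4*B)^+2 by rewrite /c E /N2 /=; ring.
      have -> : (1-4*A)^+2 + (4*B)^+2 = 16 * ((A - 4^-1)^+2 + B^+2) by field.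
      have q : (4^-1:R)^+2 = 16^-1 by field.
      rewrite q in h.
      have q2 : (16:R) * 16^-1 = 1 by field.
      nra.
    have hpar : N2 (z+1) + N2 (z-1) = 2 * N2 z + 2.
      by case: (z) => u v; rewrite /N2 /=; ring.
    have h0 := N2_ge0 (z-1).
    have hb := nrB ((z+1)^+2) (c * (z-1)^+2).
    rewrite -id (nrX2 (z+1)) (nrM c) (nrX2 (z-1)) nrM nrC ger0_norm // in hb.
    have : nr c * N2 (z-1) <= N2 (z-1) by rewrite ler_piMl // nr_ge0.
    lra.
- move=> h anz zeta hz.
  have [A [B E]] : exists A B, a = (A +i* B)%C by case: (a) => A B; exists A, B.
  have hS : N2 (a - ((4:R)^-1)%:C)%C = (A - 4^-1)^+2 + B^+2 by rewrite E /N2 /= subr0.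
  rewrite C_le4 hS in h; rewrite C_eq4 hS.
  have q : (4^-1:R)^+2 = 16^-1 by field.
  have hSA : (A - 4^-1)^+2 + B^+2 = A^+2 + B^+2 - A/2 + 16^-1 by field.
  rewrite q hSA in h *.
  have hle : A^+2 + B^+2 <= A/2 by lra.
  have hA : 0 < A.
    rewrite lt_neqAle; apply/andP; split; last by nra.
    apply/eqP => hA0; move/negP: anz; apply; apply/eqP.
    have hB : B = 0 by rewrite -hA0 in hle; nra.
    by rewrite E -hA0 hB.
  have hB : (A^+2 + B^+2 - A/2 + 16^-1 == 16^-1) = (A^+2 + B^+2 == A/2).
    apply/eqP/eqP => hh; lra.
  rewrite hB.
  case: zeta hz => u v hz.
  rewrite C_eq1 N2E in hz.
  have hb := bnd A B u v hz; rewrite -E in hb.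
  have hu : -1 <= u <= 1 by apply/andP; split; nra.
  have [hf1 hf2] := keyR A (A^+2+B^+2) u hA hle hu.
  have hv : u = 1 \/ u = -1 -> v = 0.
    by move=> hh; apply/eqP; rewrite -sqrf_eq0; apply/eqP; case: hh => hh; rewrite hh in hz; lra.
  have hiff : N2 (phi_poly a).[(u +i* v)%C] = 1 <->
     ((u +i* v)%C = 1 \/ (A ^+ 2 + B ^+ 2 == A / 2) /\ (u +i* v)%C = -1).
    rewrite eqC1 eqCm1.
    set P := N2 _ in hb *.
    split.
    + move=> h1; have := hf2; rewrite -hb h1 subrr => /(_ erefl).
      case=> [hu1|[hu1 hS2]].
      * by left; split=> //; apply: hv; left.
      * by right; split; [apply/eqP | split=> //; apply: hv; right].
    + case=> [[hu1 hv1]|[/eqP hS2 [hu1 hv1]]]; rewrite hu1 in hb.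
      * have : (2 - 2*1) * ((2 - 2*1) * (A^+2+B^+2) - 2*A) = 0 :> R by ring.
        lra.
      * rewrite hS2 in hb; lra.
  split; first by rewrite C_eq1.
  split.
    move=> hn; rewrite (C_lt1 (phi_poly a).[(u +i* v)%C]).
    have : N2 (phi_poly a).[(u +i* v)%C] != 1 by apply/eqP => /hiff.
    move: hf1; rewrite -hb; move=> hf1 hne.
    rewrite lt_neqAle hne /=; lra.
  move=> ->; rewrite /phi_poly !hornerE /=; ring.
Qed.
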